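(* Let $k$ be a field of characteristic zero and $n\geq 1$. Let $N$ be a normal subgroup of $GA_n$ containing all diagonal automorphisms of $k^n$. Then every tame automorphism of $k^n$ belongs to $N$.
   Context: $GA_n$ is the group (under composition) of polynomial automorphisms $G=(G_1,\dots,G_n)$ of $k^n$, $G_i\in k[X_1,\dots,X_n]$. An automorphism $G$ is diagonal if $G_i=c_iX_i$ with $c_i\in k\setminus\{0\}$ for all $i$; affine if $G_i=\sum_{j}a_{ij}X_j+b_i$ with $a_{ij},b_i\in k$; elementary if for some $i$, $G_i=X_i+g$ with $g\in k[X_1,\dots,X_{i-1},X_{i+1},\dots,X_n]$ and $G_j=X_j$ for $j\neq i$; tame if it is a finite composition of affine and elementary automorphisms. *)

(* Defs.v *)
From HB Require Import structures.
From mathcomp Require Import all_boot all_order all_algebra.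
From mathcomp Require Import mpoly.
Set Implicit Arguments. Unset Strict Implicit. Unset Printing Implicit Defensive.
Import GRing.Theory.
Local Open Scope ring_scope.

Definition polymap (k : fieldType) (n : nat) := n.-tuple {mpoly k[n]}.

Definition pm_id (k : fieldType) (n : nat) : polymap k n := [tuple 'X_i | i < n].

Definition pm_comp (k : fieldType) (n : nat) (G H : polymap k n) : polymap k n :=
  [tuple (tnth G i) \mPo H | i < n].

Definition pm_inverse (k : fieldType) (n : nat) (G H : polymap k n) : Prop :=
  pm_comp G H = pm_id k n /\ pm_comp H G = pm_id k n.

Definition is_aut (k : fieldType) (n : nat) (G : polymap k n) : Prop :=
  exists H, pm_inverse G H.

Definition is_diagonal (k : fieldType) (n : nat) (G : polymap k n) : Prop :=
  exists c : 'I_n -> k, (forall i, c i != 0) /\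
    forall i, tnth G i = c i *: 'X_i.

Definition is_affine (k : fieldType) (n : nat) (G : polymap k n) : Prop :=
  is_aut G /\
  exists (a : 'M[k]_n) (b : 'I_n -> k),
    forall i, tnth G i = \sum_(j < n) a i j *: 'X_j + (b i)%:MP.

Definition free_of_var (k : fieldType) (n : nat) (i : 'I_n) (g : {mpoly k[n]}) : Prop :=
  forall m, m \in msupp g -> m i = 0%N.

Definition is_elementary (k : fieldType) (n : nat) (G : polymap k n) : Prop :=
  exists (i : 'I_n) (g : {mpoly k[n]}), free_of_var i g /\
    tnth G i = 'X_i + g /\ forall j, j != i -> tnth G j = 'X_j.

Inductive is_tame (k : fieldType) (n : nat) : polymap k n -> Prop :=
| tame_affine G : is_affine G -> is_tame G
| tame_elementary G : is_elementary G -> is_tame G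
| tame_comp G H : is_tame G -> is_tame H -> is_tame (pm_comp G H).

Definition is_subgroup_GA (k : fieldType) (n : nat) (N : polymap k n -> Prop) : Prop :=
  [/\ forall G, N G -> is_aut G,
      N (pm_id k n),
      forall G H, N G -> N H -> N (pm_comp G H)
    & forall G H, N G -> pm_inverse G H -> N H].

Definition is_normal_subgroup_GA (k : fieldType) (n : nat) (N : polymap k n -> Prop) : Prop :=
  is_subgroup_GA N /\
  forall F G Ginv, N F -> pm_inverse G Ginv -> N (pm_comp (pm_comp G F) Ginv).

(* Main.v *)
Require Import Defs.
From mathcomp Require Import all_boot all_order all_algebra.
From mathcomp Require Import mpoly.
Import GRing.Theory.
Local Open Scope ring_scope.
Set Implicit Arguments. Unset Strict Implicit.

Section S.
Variables (k : fieldType) (n : nat).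
Definition aff (A : 'M[k]_n) (b : 'cV[k]_n) : polymap k n :=
  [tuple \sum_(j < n) A i j *: 'X_j + (b i 0)%:MP | i < n].

Lemma lin_comp (a : 'I_n -> k) c (t : n.-tuple {mpoly k[n]}) :
  (\sum_(j < n) a j *: 'X_j + c%:MP) \mPo t = \sum_(j<n) a j *: tnth t j + c%:MP.
Proof.
rewrite comp_mpolyD comp_mpolyC raddf_sum /=; congr (_ + _).
by apply eq_bigr => j _; rewrite comp_mpolyZ comp_mpolyXU -tnth_nth.
Qed.

Lemma tnth_aff A b i : tnth (aff A b) i = \sum_(j < n) A i j *: 'X_j + (b i 0)%:MP.
Proof. by rewrite tnth_map tnth_ord_tuple. Qed.

Lemma aff_comp A b B c : pm_comp (aff A b) (aff B c) = aff (A *m B) (A *m c + b).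
Proof.
apply: eq_from_tnth => i; rewrite tnth_map tnth_ord_tuple tnth_aff lin_comp tnth_aff.
rewrite [in RHS]mxE rmorphD addrA; congr (_ + _).
under eq_bigr do rewrite tnth_aff scalerDr.
rewrite big_split /=; congr (_ + _).
- under eq_bigr do rewrite scaler_sumr.
  rewrite exchange_big /=; apply: eq_bigr => l _; rewrite mxE scaler_suml.
  by apply: eq_bigr => j _; rewrite scalerA.
- rewrite mxE raddf_sum /=; apply: eq_bigr => j _.
  by rewrite -mul_mpolyC -rmorphM.
Qed.

Lemma aff_id : aff 1%:M 0 = pm_id k n.
Proof.
apply: eq_from_tnth => i; rewrite tnth_aff tnth_map tnth_ord_tuple mxE addr0.
rewrite (bigD1 i) //= big1 ?addr0; first by rewrite mxE eqxx scale1r.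
by move=> j /negPf ji; rewrite mxE eq_sym ji scale0r.
Qed.
Lemma freeP (i : 'I_n) (g : {mpoly k[n]}) :
  free_of_var i g <-> (forall m : 'X_{1..n}, m i != 0%N -> g@_m = 0).
Proof.
split=> [h m mi|h m]; first by apply/eqP; rewrite -[_ == 0]negbK -mcoeff_msupp;
  apply/negP => /h /eqP; rewrite (negPf mi).
by rewrite mcoeff_msupp => gm; apply/eqP; apply: contraNT gm => /h ->.
Qed.

Lemma freeN (i : 'I_n) (g : {mpoly k[n]}) : free_of_var i g -> free_of_var i (- g).
Proof. by move/freeP=> h; apply/freeP=> m /h; rewrite mcoeffN => ->; rewrite oppr0. Qed.

Lemma free_lin i (w : 'I_n -> k) : w i = 0 -> free_of_var i (\sum_(j < n) w j *: 'X_j).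
Proof.
move=> wi; apply/freeP => m mi; rewrite raddf_sum /=; apply: big1 => j _.
rewrite mcoeffZ mcoeffX; case: (eqVneq j i) => [->|ji]; first by rewrite wi mul0r.
case: eqP => [e|]; last by rewrite mulr0.
by move: mi; rewrite -e mnm1E eq_sym (negPf ji).
Qed.

Lemma comp_free (i : 'I_n) g (t : n.-tuple {mpoly k[n]}) : free_of_var i g ->
  (forall j, j != i -> tnth t j = 'X_j) -> g \mPo t = g.
Proof.
move=> hg ht; rewrite comp_mpolyEX [RHS]mpolyE; apply: eq_big_seq => m hm.
congr (_ *: _); rewrite comp_mpolyX mpolyXE_id; apply: eq_bigr => j _.
case: (eqVneq j i) => [->|ji]; first by rewrite (hg m hm) !expr0.
by rewrite ht.
Qed.

Definition gen (i : 'I_n) (c : k) (g : {mpoly k[n]}) : polymap k n :=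
  [tuple if j == i then c *: 'X_i + g else 'X_j | j < n].

Lemma tnth_gen i c g j : tnth (gen i c g) j = if j == i then c *: 'X_i + g else 'X_j.
Proof. by rewrite tnth_map tnth_ord_tuple. Qed.

Lemma gen_comp i c g d h : free_of_var i g ->
  pm_comp (gen i c g) (gen i d h) = gen i (c * d) (c *: h + g).
Proof.
move=> fg; apply: eq_from_tnth => j; rewrite tnth_map tnth_ord_tuple !tnth_gen.
have fix_ : forall l, l != i -> tnth (gen i d h) l = 'X_l.
  by move=> l li; rewrite tnth_gen (negPf li).
case: ifP => ji; last by rewrite comp_mpolyXU -tnth_nth tnth_gen ji.
rewrite comp_mpolyD comp_mpolyZ comp_mpolyXU -tnth_nth tnth_gen eqxx (comp_free fg fix_).
by rewrite scalerDr scalerA addrA.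
Qed.

Lemma gen_id i : gen i 1 0 = pm_id k n.
Proof.
apply: eq_from_tnth => j; rewrite tnth_gen tnth_map tnth_ord_tuple.
by case: eqP => [->|]; rewrite ?scale1r ?addr0.
Qed.

Lemma gen_inv i g : free_of_var i g -> pm_inverse (gen i 1 g) (gen i 1 (- g)).
Proof.
move=> fg; split; rewrite gen_comp ?mul1r ?scale1r ?(addNr, addrN) ?gen_id //.
exact: freeN.
Qed.

Lemma gen_diag i c : c != 0 -> is_diagonal (gen i c 0).
Proof.
move=> c0; exists (fun j => if j == i then c else 1); split.
  by move=> j; case: ifP => // _; exact: oner_neq0.
by move=> j; rewrite tnth_gen; case: eqP => [->|]; rewrite ?addr0 ?scale1r.
Qed.

Lemma sum_delta (F : 'I_n -> k) p : \sum_l (p == l)%:R * F l = F p.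
Proof.
rewrite (bigD1 p) //= eqxx mul1r big1 ?addr0 // => l /negPf lp.
by rewrite eq_sym lp mul0r.
Qed.

Lemma sum_delta' (F : 'I_n -> k) p : \sum_l F l * (l == p)%:R = F p.
Proof.
rewrite -[RHS](sum_delta F); apply: eq_bigr => l _; by rewrite mulrC eq_sym.
Qed.

Definition rowop (K : 'I_n) (v : 'I_n -> k) : 'M[k]_n :=
  \matrix_(i, j) (if i == K then v j else (i == j)%:R).

Definition rinv (K : 'I_n) (v : 'I_n -> k) : 'I_n -> k :=
  fun j => if j == K then (v K)^-1 else - v j / v K.

Lemma rowop_mul_rest K v A (p j : 'I_n) : p != K -> (rowop K v *m A) p j = A p j.
Proof.
move=> pK; rewrite mxE -[RHS](sum_delta (fun l => A l j)); apply: eq_bigr => l _.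
by rewrite mxE (negPf pK).
Qed.

Lemma rowop_mul_K K v A (j : 'I_n) : (rowop K v *m A) K j = \sum_l v l * A l j.
Proof. by rewrite mxE; apply: eq_bigr => l _; rewrite mxE eqxx. Qed.

Lemma rinvK K v : v K != 0 -> rowop K (rinv K v) *m rowop K v = 1%:M.
Proof.
move=> vK; apply/matrixP => p j.
case: (eqVneq p K) => [->|pK]; last by rewrite rowop_mul_rest // !mxE (negPf pK).
rewrite rowop_mul_K (bigD1 K) //= /rinv eqxx mxE eqxx mxE.
under eq_bigr => l lK do rewrite (negPf lK) mxE (negPf lK).
case: (eqVneq j K) => [->|jK].
  rewrite big1 ?addr0 ?mulVf // => l lK; by rewrite (negPf lK) mulr0.
rewrite (bigD1 j) //= eqxx mulr1 big1 ?addr0; last first.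
  by move=> l /andP [_ /negPf lj]; rewrite lj mulr0.
by rewrite mulrC mulNr addrN.
Qed.

Lemma rinv_piv K v : v K != 0 -> rinv K v K != 0.
Proof. by move=> vK; rewrite /rinv eqxx invr_eq0. Qed.

Lemma rowop_unit K v : v K != 0 -> rowop K v \in unitmx.
Proof. by move=> vK; case: (mulmx1_unit (rinvK vK)). Qed.

Section Elim.
Variable P : 'M[k]_n -> Prop.
Hypothesis P1 : P 1%:M.
Hypothesis PM : forall A B, P A -> P B -> P (A *m B).
Hypothesis PR : forall K v, v K != 0 -> P (rowop K v).

Lemma P_rowop_left K v A : v K != 0 -> P (rowop K v *m A) -> P A.
Proof.
move=> vK hA; rewrite -[A]mul1mx -(rinvK vK) -mulmxA.
by apply: PM => //; apply: PR; apply: rinv_piv.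
Qed.

Lemma elim_aux m : forall (kk : nat) (A : 'M[k]_n), (n <= kk + m)%N -> A \in unitmx ->
  (forall p j : 'I_n, (p < kk)%N -> A p j = (p == j)%:R) -> P A.
Proof.
have full : forall kk (A : 'M[k]_n), (n <= kk)%N ->
    (forall p j : 'I_n, (p < kk)%N -> A p j = (p == j)%:R) -> P A.
  move=> kk A nk hA; suff -> : A = 1%:M by [].
  by apply/matrixP => p j; rewrite mxE hA // (leq_trans (ltn_ord p) nk).
elim: m => [|m IH] kk A.
  by rewrite addn0 => nk _; apply: full.
move=> nk uA hA; case: (ltnP kk n) => [kn|]; last by move=> nk'; exact: (full kk A nk' hA).
pose K := Ordinal kn.
have case1 : forall (B : 'M[k]_n) (U : 'rV[k]_n), B \in unitmx ->
    (forall p j : 'I_n, (p < kk)%N -> B p j = (p == j)%:R) ->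
    U *m B = delta_mx 0 K -> U 0 K != 0 -> P B.
  move=> B U uB hB UB UK.
  apply: (@P_rowop_left K (fun j => U 0 j)) => //.
  apply: (IH kk.+1); first by rewrite addSnnS.
    by rewrite unitmx_mul uB rowop_unit.
  move=> p j; rewrite ltnS leq_eqVlt => /orP [/eqP pk|pk].
    have -> : p = K by apply: val_inj.
    rewrite rowop_mul_K.
    have := congr1 (fun M : 'M[k]_(1,n) => M 0 j) UB; rewrite !mxE eqxx /= eq_sym => <-.
    by [].
  rewrite rowop_mul_rest ?hB //.
  by apply/eqP => e; move: pk; rewrite e ltnn.
pose U : 'rV[k]_n := \row_j invmx A K j.
have UA : U *m A = delta_mx 0 K.
  apply/matrixP => i j; rewrite ord1 !mxE.
  have := congr1 (fun M : 'M[k]_n => M K j) (mulVmx uA); rewrite !mxE eqxx /= eq_sym => <-.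
  by apply: eq_bigr => l _; rewrite mxE.
case: (eqVneq (U 0 K) 0) => UK; last exact: case1 UA UK.
have [j0 /andP [kj Uj]] : exists j0 : 'I_n, (kk < j0)%N && (U 0 j0 != 0).
  apply/existsP; apply: contraT => /existsPn hno.
  have := congr1 (fun M : 'M[k]_(1,n) => M 0 K) UA; rewrite !mxE !eqxx /=.
  rewrite big1 => [/eqP|l _]; first by rewrite eq_sym oner_eq0.
  case: (ltngtP l kk) => [lk|kl|lk].
  - rewrite hA // ; suff /negPf -> : l != K by rewrite mulr0.
    by apply/eqP => e; move: lk; rewrite e ltnn.
  - by move: (hno l); rewrite kl /= negbK => /eqP ->; rewrite mul0r.
  - have -> : l = K by apply: val_inj.
    by rewrite UK mul0r.
have j0K : j0 != K by apply/eqP => e; move: kj; rewrite e ltnn.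
pose v := fun l : 'I_n => (l == j0)%:R + (l == K)%:R : k.
have vj : v j0 != 0 by rewrite /v eqxx (negPf j0K) addr0 oner_eq0.
apply: (@P_rowop_left j0 v) => //.
apply: (case1 _ (U *m rowop j0 (rinv j0 v))).
- by rewrite unitmx_mul uA rowop_unit.
- move=> p j pk; rewrite rowop_mul_rest ?hA //.
  by apply/eqP => e; move: kj; rewrite -e ltnNge ltnW.
- by rewrite -mulmxA (mulmxA (rowop _ _)) rinvK // mul1mx.
- rewrite mxE.
  have -> : \sum_j U 0 j * rowop j0 (rinv j0 v) j K =
            \sum_j U 0 j * (j == K)%:R - \sum_j U 0 j * (j == j0)%:R.
    rewrite -sumrB; apply: eq_bigr => l _; rewrite -mulrBr /rowop mxE /rinv; congr (_ * _).
    have e1 : (K == j0) = false by apply/negbTE; rewrite eq_sym.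
    have e2 : (j0 == K) = false by apply/negbTE.
    case: (eqVneq l j0) => [->|lj].
      by rewrite /v !eqxx e1 e2 /= add0r addr0 invr1 mulr1 sub0r.
    by rewrite subr0.
  by rewrite !sum_delta' UK sub0r oppr_eq0.
Qed.

Lemma elim (A : 'M[k]_n) : A \in unitmx -> P A.
Proof. by move=> uA; apply: (@elim_aux n 0) => //. Qed.
End Elim.

Variable N : polymap k n -> Prop.
Hypothesis hN : is_normal_subgroup_GA N.
Hypothesis hD : forall D : polymap k n, is_diagonal D -> N D.
Hypothesis hc : [pchar k] =i pred0.

Lemma two_neq0 : (2%:R : k) != 0.
Proof. by move/pcharf0P: hc => ->. Qed.

Lemma N_gen1 i g : free_of_var i g -> N (gen i 1 g).
Proof.
move=> fg; case: hN => [[_ _ Nc Ni] Nn].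
have h2 := two_neq0.
have Ng2 : N (gen i 2%:R 0) by apply: hD; apply: gen_diag.
have Ngh : N (gen i 2%:R^-1 0) by apply: hD; apply: gen_diag; rewrite invr_eq0.
have := Nn _ _ _ Ng2 (gen_inv fg).
rewrite gen_comp // mul1r scale1r add0r gen_comp // => NG.
have e : 2%:R *: - g + g = - g by rewrite scalerN scaler_nat mulr2n opprD addrNK.
rewrite mulr1 e in NG; have := Nc _ _ NG Ngh.
rewrite gen_comp; last exact: freeN.
rewrite mulfV // scaler0 add0r => Nng.
apply: (Ni _ _ Nng); rewrite -{2}(opprK g); apply: gen_inv; exact: freeN.
Qed.

Lemma N_gen i c g : c != 0 -> free_of_var i g -> N (gen i c g).
Proof.
move=> c0 fg; case: hN => [[_ _ Nc Ni] Nn].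
have := Nc _ _ (N_gen1 fg) (hD (gen_diag i c0)).
by rewrite gen_comp // mul1r scale1r add0r.
Qed.

Lemma N_elem F : is_elementary F -> N F.
Proof.
case=> i [g [fg [Fi Fj]]].
have -> : F = gen i 1 g.
  apply: eq_from_tnth => j; rewrite tnth_gen; case: eqP => [->|/eqP]; first by rewrite Fi scale1r.
  exact: Fj.
exact: N_gen1.
Qed.

Lemma aff_rowop K v : aff (rowop K v) 0 =
  gen K (v K) (\sum_(j < n) (if j == K then 0 else v j) *: 'X_j).
Proof.
apply: eq_from_tnth => i; rewrite tnth_aff tnth_gen mxE mpolyC0 addr0.
case: (eqVneq i K) => [->|iK].
  under eq_bigr do rewrite /rowop mxE eqxx.
  rewrite (bigD1 K) //= [X in _ = _ + X](bigD1 K) //= eqxx scale0r add0r; congr (_ + _).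
  by apply: eq_bigr => j /negPf ->.
under eq_bigr do rewrite /rowop mxE (negPf iK).
rewrite (bigD1 i) //= eqxx scale1r big1 ?addr0 // => j /negPf ji.
by rewrite eq_sym ji scale0r.
Qed.

Lemma N_rowop K v : v K != 0 -> N (aff (rowop K v) 0).
Proof.
move=> vK; rewrite aff_rowop; apply: N_gen => //.
by apply: free_lin; rewrite eqxx.
Qed.

Lemma N_lin A : A \in unitmx -> N (aff A 0).
Proof.
case: hN => [[_ Nid Nc _] _].
apply: (@elim (fun A => N (aff A 0))).
- by rewrite aff_id.
- by move=> B C NB NC; have := Nc _ _ NB NC; rewrite aff_comp mulmx0 add0r.
- by move=> K v; apply: N_rowop.
Qed.

Lemma aff_scalar_diag (a : k) : a != 0 -> is_diagonal (aff a%:M 0).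
Proof.
move=> a0; exists (fun _ => a); split=> // i.
rewrite tnth_aff mxE mpolyC0 addr0 (bigD1 i) //= mxE eqxx mulr1n big1 ?addr0 //.
by move=> j /negPf ji; rewrite mxE eq_sym ji mulr0n scale0r.
Qed.

Lemma aff_inv1 (b : 'cV[k]_n) : pm_inverse (aff 1%:M b) (aff 1%:M (- b)).
Proof.
by split; rewrite aff_comp mulmx1 mul1mx ?addNr ?addrN aff_id.
Qed.

Lemma N_trans (b : 'cV[k]_n) : N (aff 1%:M b).
Proof.
case: hN => [[_ _ Nc Ni] Nn].
have h2 := two_neq0.
have ND : N (aff 2%:R%:M 0) by apply: hD; apply: aff_scalar_diag.
have NDi : N (aff (2%:R^-1)%:M 0) by apply: hD; apply: aff_scalar_diag; rewrite invr_eq0.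
have := Nc _ _ (Nn _ _ _ ND (aff_inv1 b)) NDi.
rewrite !aff_comp => Nb.
suff Nb' : N (aff 1%:M (- b)) by have := Ni _ _ Nb' (aff_inv1 (- b)); rewrite opprK.
move: Nb; congr (N (aff _ _)).
  by rewrite mul1mx mulmx1 -scalar_mxM mulfV.
by rewrite !mul1mx !mulmx1 mulmx0 !add0r mul_scalar_mx scalerN scaler_nat mulr2n opprD addrNK.
Qed.

Lemma affine_unit (a : 'M[k]_n) (b : 'I_n -> k) (F : polymap k n) :
  is_aut F -> (forall i, tnth F i = \sum_(j < n) a i j *: 'X_j + (b i)%:MP) ->
  a \in unitmx.
Proof.
move=> [H [FH _]] hF.
pose C : 'M[k]_n := \matrix_(j, l) (tnth H j)@_U_(l).
suff : a *m C = 1%:M by case/mulmx1_unit.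
apply/matrixP => i l.
have := congr1 (fun G : polymap k n => (tnth G i)@_U_(l)) FH.
rewrite /= tnth_map tnth_ord_tuple hF lin_comp tnth_map tnth_ord_tuple mcoeffXU.
rewrite mcoeffD mcoeffC mnm1_eq0 mulr0 addr0 raddf_sum /= !mxE => <-.
by apply: eq_bigr => j _; rewrite mcoeffZ mxE.
Qed.

Lemma N_affine F : is_affine F -> N F.
Proof.
case=> autF [a [b hF]].
have -> : F = aff a (\col_i b i).
  by apply: eq_from_tnth => i; rewrite tnth_aff hF mxE.
case: hN => [[_ _ Nc _] _].
have := Nc _ _ (N_trans (\col_i b i)) (N_lin (affine_unit autF hF)).
by rewrite aff_comp mul1mx mulmx0 add0r.
Qed.

Lemma N_tame F : is_tame F -> N F.
Proof.
case: hN => [[_ _ Nc _] _].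
elim=> [G /N_affine //|G /N_elem //|G H _ NG _ NH]; exact: Nc.
Qed.
End S.

Theorem mainTheorem2 (k : fieldType) (n : nat) :
  [pchar k] =i pred0 -> (0 < n)%N ->
  forall N : polymap k n -> Prop,
    is_normal_subgroup_GA N ->
    (forall D : polymap k n, is_diagonal D -> N D) ->
    forall F : polymap k n, is_tame F -> N F.
Proof.
move=> hc _ N hN hD F; exact: N_tame.
Qed.
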